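(* Let $f(x,\theta)$ be a model, differentiable in its parameters $\theta\in\mathbb{R}^d$, let $\mathcal{L}(\hat y,y)$ be a loss function, and let $\kappa>0$. Let $\operatorname{Clip}_\kappa:\mathbb{R}^d\to\mathbb{R}^d$ clamp each entry of its input to $[-\kappa,\kappa]$ (leaving entries in that range unchanged). Let $\boldsymbol{\theta^{(t-1)}}=[\theta^L,\theta^U]\subseteq\mathbb{R}^d$ be an interval parameter domain, let $\mathcal{B}^{(t)}=\{(x^{(i)},y^{(i)})\}_{i=1}^b$ be a nominal batch of size $b$, and let $n$ be an integer with $0\le n\le b$. For each $i$, let $\delta_L^{(t,i)},\delta_U^{(t,i)}\in\mathbb{R}^d$ satisfy, element-wise, $$\delta_L^{(t,i)}\le \operatorname{Clip}_\kappa\Big[\nabla_\theta\mathcal{L}\big(f(x^{(i)},\theta'),y^{(i)}\big)\Big]\le\delta_U^{(t,i)}\quad\text{for all }\theta'\in\boldsymbol{\theta^{(t-1)}}.$$ Then for every $\theta^{(t-1)}\in\boldsymbol{\theta^{(t-1)}}$ and every perturbed batch $\tilde{\mathcal{B}}^{(t)}$ obtained from $\mathcal{B}^{(t)}$ by removing up to $n$ data points and adding up to $n$ arbitrary data points, the clipped descent direction $$\Delta\theta^{(t)}=\frac{1}{|\tilde{\mathcal{B}}^{(t)}|}\sum_{(x,y)\in\tilde{\mathcal{B}}^{(t)}}\operatorname{Clip}_\kappa\Big[\nabla_\theta\mathcal{L}\big(f(x,\theta^{(t-1)}),y\big)\Big]$$ satisfies, element-wise, $\Delta\theta_L^{(t)}\le\Delta\theta^{(t)}\le\Delta\theta_U^{(t)}$,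 where $$\Delta\theta_L^{(t)}=\frac1b\Big(\operatorname{SEMin}_{b-n}\{\delta_L^{(t,i)}\}_{i=1}^b-n\kappa\mathbf{1}\Big),\qquad \Delta\theta_U^{(t)}=\frac1b\Big(\operatorname{SEMax}_{b-n}\{\delta_U^{(t,i)}\}_{i=1}^b+n\kappa\mathbf{1}\Big),$$ and $\mathbf 1\in\mathbb{R}^d$ is the all-ones vector.
   Context: An interval domain $[\theta^L,\theta^U]\subseteq\mathbb{R}^d$ is the set of $\theta$ with $\theta^L_j\le\theta_j\le\theta^U_j$ for all $j$. For vectors $\{v^{(i)}\}_{i=1}^b\subseteq\mathbb{R}^d$ and an integer $a\le b$, $\operatorname{SEMax}_a\{v^{(i)}\}$ is the vector whose $j$-th entry is the sum of the $a$ largest values among $v^{(1)}_j,\dots,v^{(b)}_j$, and $\operatorname{SEMin}_a\{v^{(i)}\}$ is the vector whose $j$-th entry is the sum of the $a$ smallest values among them (computed independently at each index $j$). *)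

(* Defs.v *)
From HB Require Import structures.
From mathcomp Require Import all_boot all_order all_algebra.
From mathcomp Require Import all_classical all_reals all_analysis.
Set Implicit Arguments. Unset Strict Implicit. Unset Printing Implicit Defensive.
Import Order.TTheory GRing.Theory Num.Theory.
Import numFieldNormedType.Exports.
Local Open Scope ring_scope.

Definition grad (R : realType) (d : nat) (h : 'rV[R]_d -> R) (th : 'rV[R]_d)
  : 'rV[R]_d := \row_j ('D_(delta_mx 0 j) h th).

Definition Clip (R : realType) (d : nat) (kappa : R) (v : 'rV[R]_d) : 'rV[R]_d :=
  \row_j Num.max (- kappa) (Num.min (v 0 j) kappa).

Definition in_box (R : realType) (d : nat) (thL thU th : 'rV[R]_d) : Prop :=
  forall j, thL 0 j <= th 0 j <= thU 0 j.

Definition sum_largest (R : realType) (a : nat) (s : seq R) : R :=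
  \sum_(x <- take a (sort (fun x y => y <= x) s)) x.
Definition sum_smallest (R : realType) (a : nat) (s : seq R) : R :=
  \sum_(x <- take a (sort (fun x y => x <= y) s)) x.

Definition SEMax (R : realType) (d b : nat) (a : nat) (v : 'I_b -> 'rV[R]_d)
  : 'rV[R]_d := \row_j sum_largest a [seq v i 0 j | i <- enum 'I_b].
Definition SEMin (R : realType) (d b : nat) (a : nat) (v : 'I_b -> 'rV[R]_d)
  : 'rV[R]_d := \row_j sum_smallest a [seq v i 0 j | i <- enum 'I_b].

Definition ones (R : realType) (d : nat) : 'rV[R]_d := const_mx 1.

(* Main.v *)
Require Import Defs.
From HB Require Import structures.
From mathcomp Require Import all_boot all_order all_algebra.
From mathcomp Require Import all_classical all_reals all_analysis.
Import Order.TTheory GRing.Theory Num.Theory.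
Import numFieldNormedType.Exports.
Local Open Scope ring_scope.
From mathcomp Require Import ring lra zify.
Lemma prefix_avg (R : realFieldType) (b k m : nat) (tau : nat -> R) :
  (forall i j, (i <= j)%N -> (j < b)%N -> tau j <= tau i) ->
  (k <= m)%N -> (m <= b)%N ->
  k%:R * (\sum_(0 <= j < m) tau j) <= m%:R * (\sum_(0 <= j < k) tau j).
Proof.
move=> mono km mb.
rewrite (@big_cat_nat _ _ _ k 0 m) //=.
set A := \sum_(0 <= j < k) tau j.
have H : k%:R * (\sum_(k <= j < m) tau j) <= (m - k)%:R * A.
  have -> : k%:R * (\sum_(k <= j < m) tau j)
      = \sum_(0 <= i < k) \sum_(k <= j < m) tau j.
    by rewrite sumr_const_nat subn0 mulr_natl.
  have -> : (m - k)%:R * A = \sum_(0 <= i < k) \sum_(k <= j < m) tau i.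
    rewrite /A mulr_sumr; apply: eq_bigr => i _.
    by rewrite sumr_const_nat mulr_natl.
  rewrite big_nat [X in _ <= X]big_nat; apply: ler_sum => i /andP[_ ik].
  rewrite big_nat [X in _ <= X]big_nat; apply: ler_sum => j /andP[kj jm].
  apply: mono; lia.
rewrite natrB // in H.
rewrite mulrDr; lra.
Qed.

Definition ge_rel (R : realFieldType) := (fun x y : R => y <= x).

Lemma take_sum (R : realFieldType) (t : seq R) m : (m <= size t)%N ->
  \sum_(x <- take m t) x = \sum_(0 <= j < m) nth 0 t j.
Proof.
move=> mt; rewrite (big_nth 0) size_takel //.
by rewrite !big_nat; apply: eq_bigr => j /andP[_ jm]; rewrite nth_take.
Qed.

Lemma sort_mono (R : realFieldType) (s : seq R) :
  let t := sort (fun x y : R => y <= x) s in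
  forall i j, (i <= j)%N -> (j < size t)%N -> nth 0 t j <= nth 0 t i.
Proof.
move=> t i j ij jt.
have st : sorted (fun x y : R => y <= x) t.
  by apply: sort_sorted => x y; rewrite orbC le_total.
have tr : transitive (fun x y : R => y <= x).
  by move=> x y z /= yx zy; exact: le_trans zy yx.
have rf : reflexive (fun x y : R => y <= x) by move=> x /=.
have := @sorted_leq_nth _ (fun x y : R => y <= x) tr rf 0 t st i j.
by apply => //; rewrite inE; lia.
Qed.

Lemma subset_top (R : realFieldType) b (u : 'I_b -> R) (S : {set 'I_b}) :
  \sum_(i in S) u i <=
  \sum_(0 <= j < #|S|) nth 0 (sort (fun x y : R => y <= x) [seq u i | i <- enum 'I_b]) j.
Proof.
set t := sort _ _.
have szt : size t = b by rewrite size_sort size_map size_enum_ord.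
have mono : forall i j, (i <= j)%N -> (j < b)%N -> nth 0 t j <= nth 0 t i.
  by rewrite -szt; exact: (@sort_mono R [seq u i | i <- enum 'I_b]).
have mb : (#|S| <= b)%N by have := max_card S; rewrite card_ord.
have [m0|mpos] := posnP #|S|.
  by rewrite m0 big_geq // (cards0_eq m0) big_set0.
set m := #|S| in mb mpos *.
set c := nth 0 t m.-1.
pose pos (x : R) := Num.max x 0.
have E1 : \sum_(i in S) u i <= \sum_(i in S) pos (u i - c) + c *+ m.
  rewrite -sumr_const -big_split /=; apply: ler_sum => i _.
  have : u i - c <= pos (u i - c) by rewrite /pos le_max lexx.
  lra.
have E2 : \sum_(i in S) pos (u i - c) <= \sum_i pos (u i - c).
  rewrite [X in X <= _]big_mkcond /=; apply: ler_sum => i _.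
  by case: (i \in S) => //; rewrite /pos le_max lexx orbT.
have E3 : \sum_i pos (u i - c) = \sum_(x <- t) pos (x - c).
  have pts : perm_eq t [seq u i | i <- enum 'I_b] by rewrite perm_sort perm_refl.
  by rewrite (perm_big _ pts) big_map big_enum.
have E4 : \sum_(x <- t) pos (x - c) = \sum_(0 <= j < m) (nth 0 t j - c).
  rewrite (big_nth 0) szt (@big_cat_nat _ _ _ m 0 b) //=.
  rewrite [X in _ + X = _]big_nat [X in _ + X = _]big1 ?addr0; last first.
    move=> j /andP[mj jb]; rewrite /pos; apply/max_idPr.
    rewrite subr_le0 /c; apply: mono => //; lia.
  rewrite !big_nat; apply: eq_bigr => j /andP[_ jm]; rewrite /pos; apply/max_idPl.
  rewrite subr_ge0 /c; apply: mono; lia.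
have E5 : \sum_(0 <= j < m) (nth 0 t j - c) + c *+ m = \sum_(0 <= j < m) nth 0 t j.
  by rewrite sumrB sumr_const_nat subn0 subrK.
rewrite -E5 -E4 -E3; lra.
Qed.

Lemma arith (R : realFieldType) (m a k n K S H T : R) :
  0 <= k -> k <= m -> 0 <= a -> a <= n -> 0 <= K ->
  S <= m * K -> H <= a * K -> k * S <= m * T -> (k = 0 -> T = 0) ->
  (k + n) * (S + H) <= (m + a) * (T + n * K).
Proof.
move=> k0 km a0 an K0 SK HK kS kT.
have [Tge|Tlt] := lerP (k * K) T.
  have p1 : 0 <= (m + a) * (T - k * K) by apply: mulr_ge0; lra.
  have p2 : (k + n) * (S + H) <= (k + n) * ((m + a) * K) by apply: ler_wpM2l; lra.
  nra.
have [k00|kpos] := eqVneq k 0.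
  rewrite k00 (kT k00) !add0r.
  have : n * (S + H) <= n * ((m + a) * K) by apply: ler_wpM2l; lra.
  nra.
have kp : 0 < k by rewrite lt0r kpos.
have p1 : (k + n) * (k * S) <= (k + n) * (m * T) by apply: ler_wpM2l; lra.
have p2 : (k * (k + n)) * H <= (k * (k + n)) * (a * K) by apply: ler_wpM2l; nra.
have p3 : 0 <= (m * n - k * a) * (k * K - T) by apply: mulr_ge0; nra.
have : 0 <= k * ((m + a) * (T + n * K) - (k + n) * (S + H)) by nra.
rewrite pmulr_rge0 // subr_ge0 //.
Qed.

Lemma sum_seq_le (R : realFieldType) (h : seq R) K :
  (forall x, x \in h -> x <= K) -> \sum_(x <- h) x <= (size h)%:R * K.
Proof.
elim: h => [|y h IH] H; first by rewrite big_nil mul0r.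
rewrite big_cons /= -addn1 natrD mulrDl mul1r addrC.
apply: lerD; first by apply: IH => x xh; apply: H; rewrite inE xh orbT.
by apply: H; rewrite inE eqxx.
Qed.

Lemma key (R : realFieldType) b n (K : R) (u g : 'I_b -> R) (kept : {set 'I_b}) (h : seq R) :
  0 <= K -> (n <= b)%N -> (#|~: kept| <= n)%N -> (size h <= n)%N ->
  (forall i, i \in kept -> g i <= u i) -> (forall i, g i <= K) ->
  (forall x, x \in h -> x <= K) ->
  (#|kept| + size h)%:R^-1 * (\sum_(i in kept) g i + \sum_(x <- h) x) <=
  b%:R^-1 * (\sum_(x <- take (b - n) (sort (fun x y : R => y <= x) [seq u i | i <- enum 'I_b])) x
             + n%:R * K).
Proof.
move=> K0 nb cn hn gu gK hK.
set t := sort _ _.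
have szt : size t = b by rewrite size_sort size_map size_enum_ord.
have mono : forall i j, (i <= j)%N -> (j < b)%N -> nth 0 t j <= nth 0 t i.
  by rewrite -szt; exact: (@sort_mono R [seq u i | i <- enum 'I_b]).
have hm : (#|kept| + #|~: kept|)%N = b by rewrite cardsC card_ord.
set m := #|kept| in hm *.
set a := size h in hn *.
set k := (b - n)%N.
have km : (k <= m)%N by rewrite /k; lia.
have mb : (m <= b)%N by lia.
rewrite take_sum ?szt; last by rewrite /k; lia.
set T := \sum_(0 <= j < k) nth 0 t j.
have hA := @subset_top R b u kept; rewrite -/t -/m in hA.
have hB := @prefix_avg R b k m _ mono km mb; rewrite -/T in hB.
have hS1 : \sum_(i in kept) g i <= \sum_(i in kept) u i by apply: ler_sum.
have hS2 : \sum_(i in kept) g i <= m%:R * K.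
  by rewrite mulr_natl -sumr_const; apply: ler_sum.
have hH := @sum_seq_le R h K hK; rewrite -/a in hH.
set S := \sum_(i in kept) g i in hS1 hS2 *.
set H := \sum_(x <- h) x in hH *.
have [b0|bpos] := posnP b.
  have m0 : m = 0%N by lia.
  have a0 : a = 0%N by lia.
  by rewrite b0 m0 a0 invr0 !mul0r.
have [ma0|mapos] := posnP (m + a)%N.
  have m0 : m = 0%N by lia.
  have k0 : k = 0%N by lia.
  rewrite ma0 invr0 mul0r /T k0 big_geq // add0r.
  by apply: mulr_ge0; [rewrite invr_ge0|apply: mulr_ge0].
rewrite ler_pdivrMl ?ltr0n // mulrCA ler_pdivlMl ?ltr0n //.
have bkn : b%:R = k%:R + n%:R :> R by rewrite -natrD /k subnK.
rewrite bkn natrD.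
apply: arith.
- exact: ler0n.
- by rewrite ler_nat.
- exact: ler0n.
- by rewrite ler_nat.
- exact: K0.
- exact: hS2.
- exact: hH.
- apply: le_trans hB; apply: ler_wpM2l; first exact: ler0n.
  exact: le_trans hS1 hA.
- by move=> /eqP; rewrite pnatr_eq0 => /eqP k0; rewrite /T k0 big_geq.
Qed.
Lemma Clip_bound (R : realType) (d : nat) (kappa : R) (v : 'rV[R]_d) j :
  0 < kappa -> - kappa <= Clip kappa v 0 j <= kappa.
Proof.
move=> kp; rewrite /Clip mxE le_max lexx /= ge_max ge_min lexx orbT andbT.
by rewrite -subr_ge0 opprK; apply/ltW; rewrite addr_gt0.
Qed.

Lemma neg_sl (R : realType) a (s : seq R) :
  \sum_(x <- take a (sort (fun x y : R => y <= x) [seq - x | x <- s])) x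
  = - sum_smallest a s.
Proof.
rewrite sort_map.
set r := (X in sort X).
have -> : r = (fun x y : R => x <= y).
  by apply/funext => x; apply/funext => y; rewrite /r /= lerN2.
by rewrite -map_take big_map sumrN.
Qed.

Theorem mainTheorem2 (R : realType) (d b n : nat)
  (X Y : Type) (Yhat : normedModType R)
  (f : X -> 'rV[R]_d -> Yhat) (L : Yhat -> Y -> R) (kappa : R)
  (thL thU : 'rV[R]_d) (xs : 'I_b -> X) (ys : 'I_b -> Y)
  (dL dU : 'I_b -> 'rV[R]_d) :
  (forall x th, differentiable (f x) th) ->
  0 < kappa ->
  (n <= b)%N ->
  (forall i th', in_box thL thU th' -> forall j,
      dL i 0 j <= Clip kappa (grad (fun th => L (f (xs i) th) (ys i)) th') 0 j
      <= dU i 0 j) ->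
  forall th : 'rV[R]_d, in_box thL thU th ->
  forall (kept : {set 'I_b}) (added : seq (X * Y)),
    (#|~: kept| <= n)%N -> (size added <= n)%N ->
    let Delta :=
      (#|kept| + size added)%:R^-1 *:
        (\sum_(i in kept) Clip kappa (grad (fun th' => L (f (xs i) th') (ys i)) th)
         + \sum_(p <- added) Clip kappa (grad (fun th' => L (f p.1 th') p.2) th)) in
    forall j,
      (b%:R^-1 *: (SEMin (b - n) dL - (n%:R * kappa) *: ones R d)) 0 j <= Delta 0 j
      <= (b%:R^-1 *: (SEMax (b - n) dU + (n%:R * kappa) *: ones R d)) 0 j.
Proof.
move=> _ kp nb hbox th thbox kept added cn an Delta j.
set g := fun i => Clip kappa (grad (fun th' => L (f (xs i) th') (ys i)) th) 0 j.
set hv := [seq Clip kappa (grad (fun th' => L (f p.1 th') p.2) th) 0 j | p <- added].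
have hD : Delta 0 j = (#|kept| + size hv)%:R^-1 * (\sum_(i in kept) g i + \sum_(x <- hv) x).
  by rewrite /Delta !mxE !summxE big_map size_map.
rewrite hD.
have K0 : 0 <= kappa by apply: ltW.
have ghv : forall x, x \in hv -> - kappa <= x <= kappa.
  apply/allP; rewrite /hv; elim: (added) => //= p s ->; rewrite andbT.
  exact: Clip_bound.
have gb : forall i, - kappa <= g i <= kappa by move=> i; apply: Clip_bound.
have szh : (size hv <= n)%N by rewrite size_map.
apply/andP; split.
- have HX := @key R b n kappa (fun i => - dL i 0 j) (fun i => - g i) kept [seq - x | x <- hv]
    K0 nb cn.
  have h1 : (size [seq - x | x <- hv] <= n)%N by rewrite size_map.
  have h2 : forall i, i \in kept -> - g i <= - dL i 0 j.
    by move=> i _; rewrite lerN2; case/andP: (hbox i th thbox j).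
  have h3 : forall i, - g i <= kappa by move=> i; have /andP[g1 g2] := gb i; lra.
  have h4 : forall x, x \in [seq - x | x <- hv] -> x <= kappa.
    by move=> x /mapP[y yh ->]; have /andP[g1 g2] := ghv y yh; lra.
  have {HX} := HX h1 h2 h3 h4.
  have -> : [seq - dL i 0 j | i <- enum 'I_b] = [seq - x | x <- [seq dL i 0 j | i <- enum 'I_b]].
    by elim: (enum _) => //= i s ->.
  rewrite neg_sl size_map big_map !sumrN => HX.
  rewrite /ones !mxE mulr1; lra.
- have h2 : forall i, i \in kept -> g i <= dU i 0 j.
    by move=> i _; case/andP: (hbox i th thbox j).
  have h3 : forall i, g i <= kappa by move=> i; have /andP[g1 g2] := gb i; lra.
  have h4 : forall x, x \in hv -> x <= kappa.
    by move=> x xh; have /andP[g1 g2] := ghv x xh; lra.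
  have HX := @key R b n kappa (fun i => dU i 0 j) g kept hv K0 nb cn szh h2 h3 h4.
  rewrite /ones !mxE mulr1; exact: HX.
Qed.
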